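(* Let $n\ge1$, let $\Gamma$ be a set of formulas and $\alpha$ a formula with $\Gamma\nvdash_n\alpha$, and suppose $p_1,\dots,p_n$ are distinct propositional variables not occurring in $\Gamma\cup\{\alpha\}$. Then there exists $\Phi\in P^c$ such that $\Gamma\subseteq\Phi$, $\alpha\notin\Phi$, and $|end(\Phi)|\ge n$ (in the poset $(P^c,\subseteq)$).
   Context: Formulas are built from a countably infinite set of propositional variables and $\bot$ using $\land,\lor,\to$; $\neg\alpha:=\alpha\to\bot$. $\mathbf{ML}_n$ is the smallest superintuitionistic logic (containing intuitionistic propositional logic, closed under modus ponens and uniform substitution) that contains all instances of $\boldsymbol{kp}$: $(\neg p\to q\lor r)\to(\neg p\to q)\lor(\neg p\to r)$ and $\boldsymbol{bd}_n$: $p_n\lor(p_n\to(p_{n-1}\lor(p_{n-1}\to(\cdots(p_1\lor(p_1\to\bot))\cdots))))$, and is closed under the rule $\boldsymbol{Ed}_n$: from $\alpha\to(\beta\lor\bigvee_{i=1}^n\neg\lambda_i)$ infer $\alpha\to\beta$, where $p_1,\dots,p_n$ are distinct variables not occurring in $\alpha$ or $\beta$ and $\lambda_i=p_i\land\bigwedge_{j\neq i}\neg p_j$. $\Gamma\vdash_n\varphi$ means there are finitely many $\gamma_1,\dots,\gamma_k\in\Gamma$ with $\bigwedge_i\gamma_i\to\varphi\in\mathbf{ML}_n$. A set $\Gamma$ of formulas is closed if $\Gamma\vdash_n\varphi$ implies $\varphi\in\Gamma$; consistent if $\Gamma\nvdash_n\bot$; prime if $\varphi\lor\psi\in\Gamma$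 implies $\varphi\in\Gamma$ or $\psi\in\Gamma$. $P^c$ is the set of consistent, closed, prime sets, ordered by inclusion. $end(\Phi)$ is the set of maximal elements of $(P^c,\subseteq)$ that contain $\Phi$. *)

(* Defs.v *)
From Stdlib Require Import List Arith.
Import ListNotations.

Inductive form : Type :=
| Var : nat -> form
| Bot : form
| And : form -> form -> form
| Or  : form -> form -> form
| Imp : form -> form -> form.

Definition Neg (a : form) : form := Imp a Bot.
Definition Top : form := Imp Bot Bot.

Fixpoint occurs (p : nat) (a : form) : Prop :=
  match a with
  | Var q => p = q
  | Bot => False
  | And b c | Or b c | Imp b c => occurs p b \/ occurs p c
  end.

Fixpoint subst (s : nat -> form) (a : form) : form :=
  match a with
  | Var q => s q
  | Bot => Bot
  | And b c => And (subst s b) (subst s c)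
  | Or b c => Or (subst s b) (subst s c)
  | Imp b c => Imp (subst s b) (subst s c)
  end.

Fixpoint bigAnd (l : list form) : form :=
  match l with
  | [] => Top
  | [x] => x
  | x :: xs => And x (bigAnd xs)
  end.

Fixpoint bigOr (l : list form) : form :=
  match l with
  | [] => Bot
  | [x] => x
  | x :: xs => Or x (bigOr xs)
  end.

(* bd formula: for l = [a_n; ...; a_1],
   a_n \/ (a_n -> (a_{n-1} \/ (a_{n-1} -> ... (a_1 \/ (a_1 -> Bot))))) *)
Fixpoint bdf (l : list form) : form :=
  match l with
  | [] => Bot
  | a :: l' => Or a (Imp a (bdf l'))
  end.

Definition kpf (p q r : form) : form :=
  Imp (Imp (Neg p) (Or q r)) (Or (Imp (Neg p) q) (Imp (Neg p) r)).

Definition lam (ps : list nat) (i : nat) : form :=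
  And (Var (nth i ps 0))
      (bigAnd (map (fun j => Neg (Var (nth j ps 0)))
                   (filter (fun j => negb (Nat.eqb j i)) (seq 0 (length ps))))).

Definition EdDisj (ps : list nat) : form :=
  bigOr (map (fun i => Neg (lam ps i)) (seq 0 (length ps))).

Inductive ML (n : nat) : form -> Prop :=
| ax_K : forall a b, ML n (Imp a (Imp b a))
| ax_S : forall a b c, ML n (Imp (Imp a (Imp b c)) (Imp (Imp a b) (Imp a c)))
| ax_And1 : forall a b, ML n (Imp (And a b) a)
| ax_And2 : forall a b, ML n (Imp (And a b) b)
| ax_AndI : forall a b, ML n (Imp a (Imp b (And a b)))
| ax_Or1 : forall a b, ML n (Imp a (Or a b))
| ax_Or2 : forall a b, ML n (Imp b (Or a b))
| ax_OrE : forall a b c, ML n (Imp (Imp a c) (Imp (Imp b c) (Imp (Or a b) c)))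
| ax_Bot : forall a, ML n (Imp Bot a)
| ax_kp : forall p q r, ML n (kpf p q r)
| ax_bd : forall l, length l = n -> ML n (bdf l)
| r_MP : forall a b, ML n (Imp a b) -> ML n a -> ML n b
| r_subst : forall s a, ML n a -> ML n (subst s a)
| r_Ed : forall (a b : form) (ps : list nat),
    length ps = n -> NoDup ps ->
    (forall p, In p ps -> ~ occurs p a /\ ~ occurs p b) ->
    ML n (Imp a (Or b (EdDisj ps))) -> ML n (Imp a b).

Definition fset := form -> Prop.

Definition derives (n : nat) (G : fset) (phi : form) : Prop :=
  exists l : list form, (forall g, In g l -> G g) /\ ML n (Imp (bigAnd l) phi).

Definition closed_set (n : nat) (G : fset) : Prop :=
  forall phi, derives n G phi -> G phi.
Definition consistent (n : nat) (G : fset) : Prop := ~ derives n G Bot.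
Definition prime_set (G : fset) : Prop :=
  forall a b, G (Or a b) -> G a \/ G b.

Definition Pc (n : nat) (G : fset) : Prop :=
  consistent n G /\ closed_set n G /\ prime_set G.

Definition subset (A B : fset) : Prop := forall phi, A phi -> B phi.
Definition same_set (A B : fset) : Prop := forall phi, A phi <-> B phi.

Definition maximal_Pc (n : nat) (G : fset) : Prop :=
  Pc n G /\ forall D, Pc n D -> subset G D -> subset D G.

Definition in_end (n : nat) (Phi G : fset) : Prop :=
  maximal_Pc n G /\ subset Phi G.

Definition end_card_ge (n : nat) (Phi : fset) (k : nat) : Prop :=
  exists f : nat -> fset,
    (forall i, i < k -> in_end n Phi (f i)) /\
    (forall i j, i < k -> j < k -> i <> j -> ~ same_set (f i) (f j)).

(* Main.v *)
Require Import Defs.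
From Stdlib Require Import List Arith Lia Classical Cantor.
Import ListNotations.

Fixpoint enc (a : form) : nat :=
  match a with
  | Var q => Cantor.to_nat (0, q)
  | Bot => Cantor.to_nat (1, 0)
  | And b c => Cantor.to_nat (2, Cantor.to_nat (enc b, enc c))
  | Or b c => Cantor.to_nat (3, Cantor.to_nat (enc b, enc c))
  | Imp b c => Cantor.to_nat (4, Cantor.to_nat (enc b, enc c))
  end.

Fixpoint dec (f k : nat) : form :=
  match f with
  | 0 => Bot
  | S f => match Cantor.of_nat k with
     | (0, r) => Var r
     | (1, _) => Bot
     | (2, r) => match Cantor.of_nat r with (x, y) => And (dec f x) (dec f y) end
     | (3, r) => match Cantor.of_nat r with (x, y) => Or (dec f x) (dec f y) end
     | (_, r) => match Cantor.of_nat r with (x, y) => Imp (dec f x) (dec f y) end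
     end
  end.

Fixpoint depth (a : form) : nat :=
  match a with
  | Var _ | Bot => 0
  | And b c | Or b c | Imp b c => S (Nat.max (depth b) (depth c))
  end.

Lemma dec_enc a : forall f, depth a < f -> dec f (enc a) = a.
Proof.
  induction a; intros [|f] H; cbn [depth] in H; try lia; cbn [dec enc];
  rewrite ?Cantor.cancel_of_to; try reflexivity;
  rewrite ?Cantor.cancel_of_to; rewrite IHa1, IHa2; auto; lia.
Qed.

Definition enum (k : nat) : form := let (f, c) := Cantor.of_nat k in dec f c.

Lemma enum_surj a : exists k, enum k = a.
Proof.
  exists (Cantor.to_nat (S (depth a), enc a)). unfold enum.
  rewrite Cantor.cancel_of_to. apply dec_enc. lia.
Qed.

Inductive Pr (n : nat) (G : fset) : form -> Prop :=
| Pr_hyp : forall a, G a -> Pr n G a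
| Pr_ax : forall a, ML n a -> Pr n G a
| Pr_mp : forall a b, Pr n G (Imp a b) -> Pr n G a -> Pr n G b.

Lemma Pr_mono n G G' a : Pr n G a -> (forall x, G x -> G' x) -> Pr n G' a.
Proof.
  induction 1; intros.
  - apply Pr_hyp; auto.
  - apply Pr_ax; auto.
  - eapply Pr_mp; eauto.
Qed.

Lemma Pr_cut n H G a : Pr n H a -> (forall y, H y -> Pr n G y) -> Pr n G a.
Proof.
  induction 1; intros.
  - auto.
  - apply Pr_ax; auto.
  - eapply Pr_mp; eauto.
Qed.

Lemma ML_id n a : ML n (Imp a a).
Proof.
  apply (r_MP n (Imp a (Imp a a))).
  - apply (r_MP n (Imp a (Imp (Imp a a) a))). apply ax_S. apply ax_K.
  - apply ax_K.
Qed.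

Lemma deduction n G a b : Pr n (fun y => G y \/ y = a) b -> Pr n G (Imp a b).
Proof.
  induction 1 as [x [Hx|Hx]|x Hx|x y _ IH1 _ IH2].
  - eapply Pr_mp. apply Pr_ax, ax_K. apply Pr_hyp; auto.
  - subst. apply Pr_ax, ML_id.
  - eapply Pr_mp. apply Pr_ax, ax_K. apply Pr_ax; auto.
  - apply Pr_mp with (Imp a x); [apply Pr_mp with (Imp a (Imp x y)); [apply Pr_ax, ax_S|exact IH1]|exact IH2].
Qed.

Lemma Pr_fin n G a : Pr n G a -> exists l, (forall x, In x l -> G x) /\ Pr n (fun x => In x l) a.
Proof.
  induction 1.
  - exists [a]. split. intros x [<-|[]]; auto. apply Pr_hyp; simpl; auto.
  - exists []. split. intros x []. apply Pr_ax; auto.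
  - destruct IHPr1 as [l1 [H1 P1]], IHPr2 as [l2 [H2 P2]]. exists (l1++l2). split.
    + intros x Hx; apply in_app_or in Hx; destruct Hx; auto.
    + apply Pr_mp with a; [eapply Pr_mono; [exact P1|] | eapply Pr_mono;[exact P2|]];
      intros; apply in_or_app; auto.
Qed.

Lemma Pr_bigAnd n l : Pr n (fun x => In x l) (bigAnd l).
Proof.
  induction l as [|x l IH].
  - simpl. apply Pr_ax, ax_Bot.
  - destruct l as [|y l'].
    + simpl. apply Pr_hyp; simpl; auto.
    + change (bigAnd (x::y::l')) with (And x (bigAnd (y::l'))).
      apply Pr_mp with (bigAnd (y::l')). apply Pr_mp with x. apply Pr_ax, ax_AndI.
      apply Pr_hyp; simpl; auto.
      eapply Pr_mono; [exact IH|]. intros z Hz; right; exact Hz.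
Qed.

Lemma bigAnd_in n l x : In x l -> Pr n (fun y => y = bigAnd l) x.
Proof.
  induction l as [|y l IH]; intros H.
  - destruct H.
  - destruct l as [|z l'].
    + destruct H as [<-|[]]. apply Pr_hyp; reflexivity.
    + destruct H as [<-|H].
      * apply Pr_mp with (bigAnd (y::z::l')). apply Pr_ax, ax_And1. apply Pr_hyp; reflexivity.
      * eapply Pr_cut. apply IH; exact H.
        intros w ->. apply Pr_mp with (bigAnd (y::z::l')). apply Pr_ax, ax_And2.
        apply Pr_hyp; reflexivity.
Qed.

Lemma bigOr_in n l x : In x l -> Pr n (fun y => y = x) (bigOr l).
Proof.
  induction l as [|y l IH]; intros H.
  - destruct H.
  - destruct l as [|z l'].
    + destruct H as [<-|[]]. apply Pr_hyp; reflexivity.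
    + change (bigOr (y::z::l')) with (Or y (bigOr (z::l'))).
      destruct H as [<-|H].
      * apply Pr_mp with y. apply Pr_ax, ax_Or1. apply Pr_hyp; reflexivity.
      * apply Pr_mp with (bigOr (z::l')). apply Pr_ax, ax_Or2. apply IH; exact H.
Qed.

Lemma Pr_empty_ML n a : Pr n (fun _ => False) a -> ML n a.
Proof. induction 1; [contradiction|auto|eapply r_MP; eauto]. Qed.

Lemma derives_Pr n G a : derives n G a <-> Pr n G a.
Proof.
  split.
  - intros [l [Hl HM]]. apply Pr_mp with (bigAnd l). apply Pr_ax; auto.
    eapply Pr_cut. apply Pr_bigAnd. intros y Hy; apply Pr_hyp; auto.
  - intros H. destruct (Pr_fin _ _ _ H) as [l [Hl P]]. exists l; split; auto.
    apply Pr_empty_ML. apply deduction. eapply Pr_cut. exact P.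
    intros y Hy. eapply Pr_mono. apply bigAnd_in; exact Hy. intros z ->; right; reflexivity.
Qed.

Lemma occurs_bigAnd p l : occurs p (bigAnd l) -> exists g, In g l /\ occurs p g.
Proof.
  induction l as [|x l IH]; intros H.
  - unfold bigAnd, Top in H; simpl in H; tauto.
  - destruct l as [|y l'].
    + exists x; simpl; auto.
    + change (occurs p (And x (bigAnd (y::l')))) in H. destruct H as [H|H].
      * exists x; simpl; auto.
      * destruct (IH H) as [g [? ?]]. exists g; split; [right|]; auto.
Qed.

Fixpoint chain n (G : fset) b (k : nat) : fset :=
  match k with
  | 0 => G
  | S k => fun y => chain n G b k y \/
      (y = enum k /\ ~ Pr n (fun z => chain n G b k z \/ z = enum k) b)
  end.

Definition lim n G b : fset := fun y => exists k, chain n G b k y.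

Lemma chain_mono n G b k m y : k <= m -> chain n G b k y -> chain n G b m y.
Proof.
  induction 1; auto. intros Hy. simpl. left; auto.
Qed.

Lemma chain_noPr n G b k : ~ Pr n G b -> ~ Pr n (chain n G b k) b.
Proof.
  intros H0. induction k as [|k IH]; simpl; auto.
  intros HP.
  destruct (classic (Pr n (fun z => chain n G b k z \/ z = enum k) b)) as [Hc|Hc].
  - apply IH. eapply Pr_mono; [exact HP|]. intros x [Hx|[_ Hx]]; tauto.
  - apply Hc. eapply Pr_mono; [exact HP|]. intros x [Hx|[Hx _]]; auto.
Qed.

Lemma lim_list n G b l : (forall x, In x l -> lim n G b x) -> exists K, forall x, In x l -> chain n G b K x.
Proof.
  induction l as [|a l IH]; intros H.
  - exists 0; intros x [].
  - destruct IH as [K HK]. intros; apply H; right; auto.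
    destruct (H a (or_introl eq_refl)) as [k Hk].
    exists (Nat.max k K). intros x [<-|Hx].
    + eapply chain_mono; [|exact Hk]; lia.
    + eapply chain_mono; [|apply HK; exact Hx]; lia.
Qed.

Lemma lim_noPr n G b : ~ Pr n G b -> ~ Pr n (lim n G b) b.
Proof.
  intros H0 HP. destruct (Pr_fin _ _ _ HP) as [l [Hl P]].
  destruct (lim_list n G b l Hl) as [K HK].
  apply (chain_noPr n G b K H0). eapply Pr_mono; [exact P|]. auto.
Qed.

Lemma lim_sub n G b x : G x -> lim n G b x.
Proof. intros; exists 0; auto. Qed.

Lemma lim_prop n G b x : ~ lim n G b x -> Pr n (fun y => lim n G b y \/ y = x) b.
Proof.
  intros H. destruct (enum_surj x) as [k <-].
  apply NNPP. intros HN. apply H. exists (S k). simpl. right. split; auto.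
  intros HP. apply HN. eapply Pr_mono; [exact HP|].
  intros y [Hy|Hy]; [left; exists k|right]; auto.
Qed.

Lemma lim_closed n G b x : ~ Pr n G b -> Pr n (lim n G b) x -> lim n G b x.
Proof.
  intros H0 Hx. apply NNPP; intros Hn. apply (lim_noPr n G b H0).
  eapply Pr_cut. apply (lim_prop n G b x Hn).
  intros y [Hy| ->]; [apply Pr_hyp|]; auto.
Qed.

Lemma lim_prime n G b : ~ Pr n G b -> prime_set (lim n G b).
Proof.
  intros H0 x y Hxy. apply NNPP; intros Hn.
  apply (lim_noPr n G b H0).
  apply Pr_mp with (Or x y); [|apply Pr_hyp; auto].
  apply Pr_mp with (Imp y b); [apply Pr_mp with (Imp x b); [apply Pr_ax, ax_OrE|]|];
  apply deduction, lim_prop; tauto.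
Qed.

Lemma lim_Pc n G b : ~ Pr n G b -> Pc n (lim n G b).
Proof.
  intros H0. split; [|split].
  - intros HD. apply derives_Pr in HD. apply (lim_noPr n G b H0).
    apply Pr_mp with Bot; auto. apply Pr_ax, ax_Bot.
  - intros phi HD. apply derives_Pr in HD. apply lim_closed; auto.
  - apply lim_prime; auto.
Qed.

Lemma lim_max n G : ~ Pr n G Bot -> maximal_Pc n (lim n G Bot).
Proof.
  intros H0. split. apply lim_Pc; auto.
  intros D [HD _] Hsub x Hx. apply NNPP; intros Hn.
  apply HD. apply derives_Pr. eapply Pr_mono. apply (lim_prop n G Bot x Hn).
  intros y [Hy| ->]; auto.
Qed.

Lemma lam_incons n ps i j : i <> j -> i < length ps -> j < length ps ->
  Pr n (fun y => y = lam ps i \/ y = lam ps j) Bot.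
Proof.
  intros Hij Hi Hj.
  apply Pr_mp with (Var (nth i ps 0)).
  - change (Imp (Var (nth i ps 0)) Bot) with (Neg (Var (nth i ps 0))).
    eapply Pr_cut. apply (bigAnd_in n (map (fun k => Neg (Var (nth k ps 0))) (filter (fun k => negb (Nat.eqb k j)) (seq 0 (length ps))))).
    apply (in_map (fun k => Neg (Var (nth k ps 0)))).
    apply filter_In. split. apply in_seq. lia.
    apply Bool.negb_true_iff, Nat.eqb_neq. auto.
    intros y ->. apply Pr_mp with (lam ps j). apply Pr_ax. unfold lam at 1. apply ax_And2.
    apply Pr_hyp; auto.
  - apply Pr_mp with (lam ps i). apply Pr_ax. unfold lam at 1. apply ax_And1.
    apply Pr_hyp; auto.
Qed.

Theorem mainTheorem6 (n : nat) (Gamma : fset) (alpha : form) (ps : list nat) :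
  1 <= n ->
  ~ derives n Gamma alpha ->
  length ps = n -> NoDup ps ->
  (forall p, In p ps -> ~ occurs p alpha /\ (forall g, Gamma g -> ~ occurs p g)) ->
  exists Phi : fset,
    Pc n Phi /\ subset Gamma Phi /\ ~ Phi alpha /\ end_card_ge n Phi n.
Proof.
  intros _ Hder Hlen Hnd Hocc.
  set (beta := Or alpha (EdDisj ps)).
  assert (Hnb : ~ Pr n Gamma beta).
  { intros HP. apply derives_Pr in HP. destruct HP as [l [Hl HM]].
    apply Hder. exists l. split; auto.
    apply (r_Ed n (bigAnd l) alpha ps Hlen Hnd); auto.
    intros p Hp. destruct (Hocc p Hp) as [H1 H2]. split; auto.
    intros Ho. destruct (occurs_bigAnd p l Ho) as [g [Hg Hog]].
    apply (H2 g); auto. }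
  set (Phi := lim n Gamma beta).
  assert (HPhi : ~ Pr n Phi beta) by apply lim_noPr, Hnb.
  assert (Hneg : forall i, i < n -> ~ Pr n Phi (Neg (lam ps i))).
  { intros i Hi HP. apply HPhi. unfold beta.
    apply Pr_mp with (EdDisj ps). apply Pr_ax, ax_Or2.
    eapply Pr_cut. apply (bigOr_in n _ (Neg (lam ps i))). unfold EdDisj.
    apply (in_map (fun k => Neg (lam ps k))). apply in_seq. lia.
    intros y ->. exact HP. }
  assert (HPsi : forall i, i < n -> ~ Pr n (fun y => Phi y \/ y = lam ps i) Bot).
  { intros i Hi HP. apply (Hneg i Hi). apply deduction. exact HP. }
  exists Phi. split; [|split; [|split]].
  - apply lim_Pc; auto.
  - intros x Hx. apply lim_sub; auto.
  - intros Ha. apply HPhi. apply Pr_mp with alpha. apply Pr_ax, ax_Or1. apply Pr_hyp; auto.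
  - exists (fun i => lim n (fun y => Phi y \/ y = lam ps i) Bot). split.
    + intros i Hi. split. apply lim_max. apply HPsi; auto.
      intros x Hx. apply lim_sub. auto.
    + intros i j Hi Hj Hij Hs.
      apply (lim_noPr n _ Bot (HPsi i Hi)).
      eapply Pr_cut. apply (lam_incons n ps i j Hij); lia.
      intros y [->| ->]; apply Pr_hyp.
      * apply lim_sub; auto.
      * apply Hs. apply lim_sub; auto.
Qed.
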